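(* Let $e=(1,0)$ and $g(s)=1+|s|^2-2\frac{s_1^2}{|s|}$ for $s=(s_1,s_2)\in\mathbb{R}^2$. Then $$\left|\frac{\varepsilon^2}{2\varepsilon^2+g(e+\varepsilon k)}-\frac{1}{2+k_1^2+2k_3^2}\right|\lesssim\frac{\varepsilon|k|^3}{(1+|k|^2)^2}$$ uniformly over $k=(k_1,k_3)$ with $|k|<\delta/\varepsilon$.
   Context: $\delta\in(0,\frac15)$ is fixed and $\varepsilon>0$. $A\lesssim B$ means $A\le CB$ with a constant $C$ independent of $\varepsilon$ and $k$. *)

(* Defs.v *)
From Stdlib Require Export Reals Lra.
Open Scope R_scope.

Definition norm2 (a b : R) : R := sqrt (a ^ 2 + b ^ 2).

Definition g (s1 s2 : R) : R :=
  1 + (norm2 s1 s2) ^ 2 - 2 * (s1 ^ 2 / norm2 s1 s2).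

(* Main.v *)
Require Import Defs.
From Stdlib Require Import Reals Lra Psatz.
Open Scope R_scope.
Lemma sq_le (x y : R) : 0 <= y -> x^2 <= y^2 -> x <= y.
Proof. intros. destruct (Rle_lt_dec x y); auto. nra. Qed.

Lemma core (eps k1 k3 n a r : R): 0<eps -> 0<=n -> n^2 = k1^2+k3^2 -> eps*n < 1/5 ->
  r = 1+eps*a -> 0 <= r -> r^2 = 1 + 2*eps*k1 + eps^2*n^2 ->
  Rabs(1/(2+a^2+2*k3^2/r) - 1/(2+k1^2+2*k3^2)) <= 25*(eps*n^3/(1+n^2)^2).
Proof.
  intros He Hn Hn2 Ht Hr Hr0 Hr2.
  assert (Hk1 : k1^2 <= n^2) by nra.
  assert (Hk1a : -n <= k1 <= n) by (split; nra).
  assert (Hru : r <= 1 + eps*n). { assert (eps*k1 <= eps*n) by (apply Rmult_le_compat_l; lra). assert (r^2 <= (1+eps*n)^2) by nra. apply sq_le; nra. }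
  assert (Hrl : 1 - eps*n <= r). { assert (-(eps*n) <= eps*k1) by nra. assert ((1-eps*n)^2 <= r^2) by nra. apply sq_le; nra. }
  assert (Ha : -n <= a <= n) by (split; nra).
  assert (Hrel : 2*a + eps*a^2 = 2*k1 + eps*n^2).
  { apply Rmult_eq_reg_l with eps; [|lra]. subst r. nra. }
  assert (Hd : 0 <= a - k1 <= eps*n^2/2) by (split; nra).
  set (q := 1/r).
  assert (Hq : q * r = 1) by (unfold q; field; lra).
  assert (Hq1 : 0 < q) by (unfold q; apply Rdiv_lt_0_compat; lra).
  assert (Hq2 : q <= 5/4) by nra.
  assert (Hq3 : 5/6 <= q) by nra.
  replace (2*k3^2/r) with (2*k3^2*q) by (unfold q; field; lra).
  set (X := 2+a^2+2*k3^2*q). set (T := 2+k1^2+2*k3^2).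
  assert (HT : 1 + n^2 <= T) by (unfold T; nra).
  assert (HX : 4/25*(1+n^2) <= X).
  { unfold X. destruct (Rle_lt_dec (k1^2) (n^2/4)).
    - nra.
    - assert (a^2 >= 4/25*n^2); [|nra].
      assert (eps*n^2/2 <= n/10) by nra.
      destruct (Rle_lt_dec 0 k1).
      + assert (k1 >= n/2) by (apply Rle_ge, sq_le; nra). nra.
      + assert (-k1 >= n/2) by (apply Rle_ge, sq_le; nra). nra. }
  assert (Hqa : q - 1 = - eps*a*q) by (subst r; nra).
  assert (HXT : Rabs (X - T) <= 7/2*(eps*n^3)).
  { unfold X, T. apply Rabs_le. 
    assert (Hk3 : k3^2 <= n^2) by nra.
    assert (Hm : Rabs (a^2-k1^2) <= eps*n^3).
    { replace (a^2-k1^2) with ((a-k1)*(a+k1)) by ring. rewrite Rabs_mult.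
      rewrite (Rabs_pos_eq (a-k1)) by lra.
      assert (Rabs (a+k1) <= 2*n) by (apply Rabs_le; lra).
      assert (0 <= Rabs (a+k1)) by apply Rabs_pos. nra. }
    assert (Hw : Rabs (2*k3^2*(q-1)) <= 5/2*(eps*n^3)).
    { rewrite Hqa. apply Rabs_le. assert (0 <= k3^2) by nra. assert (0<= eps*n) by nra.
      destruct (Rle_lt_dec 0 a).
      + assert (eps*a*q <= eps*n*(5/4)) by (apply Rmult_le_compat; nra).
        assert (0 <= eps*a*q) by (apply Rmult_le_pos; nra). split; nra.
      + assert (-(eps*a)*q <= eps*n*(5/4)) by (apply Rmult_le_compat; nra).
        assert (0 <= -(eps*a)*q) by (apply Rmult_le_pos; nra). split; nra. }
    split.
    + pose proof (Rle_abs (-(a^2-k1^2))). pose proof (Rle_abs (-(2*k3^2*(q-1)))). rewrite Rabs_Ropp in *. lra.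
    + pose proof (Rle_abs ((a^2-k1^2))). pose proof (Rle_abs ((2*k3^2*(q-1)))). lra. }
  assert (HXp : 0 < X) by nra. assert (HTp : 0 < T) by nra.
  assert (E : 1/X - 1/T = (-(X-T)) * / (X*T)) by (field; lra).
  rewrite E, Rabs_mult, Rabs_Ropp, (Rabs_pos_eq (/ (X*T))) by (left; apply Rinv_0_lt_compat; nra).
  set (P := (1+n^2)^2).
  assert (HP : 0 < P) by (unfold P; nra).
  assert (HXTP : 4/25*P <= X*T) by (unfold P; nra).
  assert (HI : / (X*T) <= / (4/25*P)) by (apply Rinv_le_contravar; nra).
  assert (0 <= eps*n^3) by (apply Rmult_le_pos; [lra| apply pow_le; lra]).
  assert (0 <= / (X*T)) by (left; apply Rinv_0_lt_compat; nra).
  apply Rle_trans with (7/2*(eps*n^3) * / (4/25*P)).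
  { apply Rmult_le_compat; try lra; apply Rabs_pos. }
  assert (0 <= eps*n^3/P) by (unfold Rdiv; apply Rmult_le_pos; [lra | left; apply Rinv_0_lt_compat; lra]).
  replace (7/2*(eps*n^3) * / (4/25*P)) with (175/8 * (eps*n^3/P)) by (field; lra).
  lra.
Qed.

Theorem proposition5p2 (delta : R) (Hdelta : 0 < delta < 1/5) :
  exists C : R, 0 <= C /\
    forall (eps k1 k3 : R), 0 < eps -> norm2 k1 k3 < delta / eps ->
      Rabs (eps ^ 2 / (2 * eps ^ 2 + g (1 + eps * k1) (eps * k3))
            - 1 / (2 + k1 ^ 2 + 2 * k3 ^ 2))
      <= C * (eps * (norm2 k1 k3) ^ 3 / (1 + (norm2 k1 k3) ^ 2) ^ 2).
Proof.
  exists 25. split; [lra|].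
  intros eps k1 k3 He Hn.
  unfold g.
  set (n := norm2 k1 k3) in *.
  set (r := norm2 (1 + eps*k1) (eps*k3)).
  assert (Hn0 : 0 <= n) by (unfold n, norm2; apply sqrt_pos).
  assert (Hn2 : n^2 = k1^2 + k3^2) by (unfold n, norm2; apply pow2_sqrt; apply Rplus_le_le_0_compat; apply pow2_ge_0).
  assert (Hr0 : 0 <= r) by (unfold r, norm2; apply sqrt_pos).
  assert (Hr2 : r^2 = (1+eps*k1)^2 + (eps*k3)^2) by (unfold r, norm2; apply pow2_sqrt; apply Rplus_le_le_0_compat; apply pow2_ge_0).
  assert (Ht : eps*n < 1/5).
  { apply Rmult_lt_compat_l with (r:=eps) in Hn; [|lra].
    replace (eps*(delta/eps)) with delta in Hn by (field; lra). lra. }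
  assert (Hr2' : r^2 = 1 + 2*eps*k1 + eps^2*n^2) by (rewrite Hr2, Hn2; ring).
  assert (Hrp : 0 < r).
  { destruct Hr0 as [?|Hr0]; auto. rewrite <- Hr0 in Hr2'.
    assert (k1^2 <= n^2) by (pose proof (pow2_ge_0 k3); lra). assert (-n <= k1) by nra. assert (-(eps*n) <= eps*k1) by nra. nra. }
  assert (Ha : r = 1 + eps*((r-1)/eps)) by (field; lra).
  pose proof (core eps k1 k3 n ((r-1)/eps) r He Hn0 Hn2 Ht Ha Hr0 Hr2') as Hc.
  set (a := (r-1)/eps) in *.
  assert (HX : 0 < 2 + a^2 + 2*k3^2/r).
  { assert (0 <= 2*k3^2/r) by (unfold Rdiv; apply Rmult_le_pos; [nra|left; apply Rinv_0_lt_compat; lra]). nra. }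
  assert (Eq : 2 * eps ^ 2 + (1 + r ^ 2 - 2 * ((1 + eps * k1) ^ 2 / r)) = eps^2 * (2 + a^2 + 2*k3^2/r)).
  { unfold a. replace ((1 + eps * k1) ^ 2) with (r^2 - (eps*k3)^2) by lra. field. lra. }
  rewrite Eq.
  replace (eps ^ 2 / (eps ^ 2 * (2 + a ^ 2 + 2 * k3 ^ 2 / r))) with (1 / (2 + a ^ 2 + 2 * k3 ^ 2 / r)) by (field; repeat split; try lra; intro Hz; assert (Hm : r * (2 + a ^ 2 + 2 * k3 ^ 2 / r) > 0) by (apply Rmult_gt_0_compat; lra); replace (r * (2 + a ^ 2 + 2 * k3 ^ 2 / r)) with (2*r + a^2*r + 2*k3^2) in Hm by (field; lra); nra).
  exact Hc.
Qed.
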